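(* Let $D$ be a nonempty closed subset of $\mathbb R$ with $D\subseteq(0,1)$. Let $c:[0,1]\to[0,\infty]$ be grounded and lower semicontinuous with $c(1)=\infty$, and let $\succsim$ be the binary relation on $l_\infty$ represented by $I(x)=\min_{\delta\in[0,1)}\{(1-\delta)\sum_{t\ge0}\delta^tx_t+c(\delta)\}$ (i.e. $x\succsim y\iff I(x)\ge I(y)$). Then the following are equivalent: (i) $\succsim$ satisfies Unanimity: for all $x,y\in l_\infty$, if $(1-\delta)\sum_t\delta^tx_t\ge(1-\delta)\sum_t\delta^ty_t$ for all $\delta\in D$, then $x\succsim y$; (ii) $c(\delta)=\infty$ for every $\delta\in[0,1]\setminus D$. Consequently, under (i), $I(x)=\min_{\delta\in D}\{(1-\delta)\sum_{t\ge0}\delta^tx_t+c(\delta)\}$.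
   Context: $l_\infty$: real bounded sequences $x=(x_0,x_1,\dots)$. A function is grounded if its infimum is $0$. Convention $0^0=1$. *)

(* Defs.v *)
From HB Require Import structures.
From mathcomp Require Import all_boot all_order all_algebra.
From mathcomp Require Import all_classical all_reals all_analysis.
Set Implicit Arguments. Unset Strict Implicit. Unset Printing Implicit Defensive.
Import Order.TTheory GRing.Theory Num.Theory.
Import numFieldNormedType.Exports.
Local Open Scope classical_set_scope.
Local Open Scope ring_scope.

Definition linfty (R : realType) (x : nat -> R) : Prop :=
  exists M : R, forall t, `|x t| <= M.

Definition dsum (R : realType) (d : R) (x : nat -> R) : R :=
  (1 - d) * limn (series (fun t => d ^+ t * x t)).

Definition grounded (R : realType) (c : R -> \bar R) : Prop :=
  ereal_inf [set c d | d in `[0, 1]%classic] = 0%E.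

Definition lsc01 (R : realType) (c : R -> \bar R) : Prop :=
  forall a, a \in `[0, 1] -> forall r : \bar R, (r < c a)%E ->
    exists2 e : R, 0 < e & forall b, b \in `[0, 1] -> `|b - a| < e -> (r < c b)%E.

Definition objval (R : realType) (c : R -> \bar R) (x : nat -> R) (d : R) : \bar R :=
  ((dsum d x)%:E + c d)%E.

(* I(x) = min_{d in [0,1)} { (1-d) sum_t d^t x_t + c(d) } (taken as an infimum;
   attainment is a property, not part of the definition) *)
Definition Ifun (R : realType) (c : R -> \bar R) (x : nat -> R) : \bar R :=
  ereal_inf [set objval c x d | d in `[0, 1[%classic].

Definition pref (R : realType) (c : R -> \bar R) (x y : nat -> R) : Prop :=
  (Ifun c y <= Ifun c x)%E.

Definition unanimity (R : realType) (D : set R) (c : R -> \bar R) : Prop :=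
  forall x y : nat -> R, linfty x -> linfty y ->
    (forall d, D d -> dsum d y <= dsum d x) -> pref c x y.

(* Main.v *)
Require Import Defs.
From HB Require Import structures.
From mathcomp Require Import all_boot all_order all_algebra.
From mathcomp Require Import all_classical all_reals all_analysis.
From mathcomp Require Import ring lra.
Import Order.TTheory GRing.Theory Num.Theory.
Import numFieldNormedType.Exports.
Local Open Scope classical_set_scope.
Local Open Scope ring_scope.

Section helpers.
Variable R : realType.

Lemma limn_abs_le (u : nat -> R) K : cvgn u -> (forall n, `|u n| <= K) ->
  `|limn u| <= K.
Proof.
move=> cu uK; rewrite -lim_norm //; apply: limr_le.
  exact: is_cvg_norm.
by near=> n; apply: uK.
Unshelve. all: by end_near. Qed.

Lemma series_cvg_bounded (d : R) (x : nat -> R) : 0 <= d < 1 -> linfty x ->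
  cvgn (series (fun t => d ^+ t * x t)).
Proof.
move=> /andP[d0 d1] [M xM].
apply: (@normed_cvg _ R^o).
have M0 : 0 <= M by apply: le_trans (xM 0%N).
apply: (@series_le_cvg _ _ (geometric M d)).
- by move=> n; rewrite normr_ge0.
- by move=> n; apply: geometric_ge0.
- move=> n /=; rewrite normrM normrX ger0_norm // mulrC; apply: ler_wpM2r.
    exact: exprn_ge0.
  exact: xM.
- by apply: is_cvg_geometric_series; rewrite ger0_norm.
Qed.


Lemma closed_gap (D : set R) a : closed D -> ~ D a ->
  exists2 r : R, 0 < r & forall d, D d -> r <= `|d - a|.
Proof.
move=> cD nDa.
have : nbhs a (~` D) by apply: open_nbhs_nbhs; split => //; exact: closed_openC.
move=> /nbhs_normP [e /= e0 eD]; exists e => // d Dd.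
rewrite leNgt; apply/negP => lt; apply: (eD d) => //=.
by rewrite /= distrC.
Qed.

Lemma geo_sum_le (d : R) n : 0 <= d < 1 -> \sum_(t < n) d ^+ t <= (1 - d)^-1.
Proof.
move=> /andP[d0 d1].
have := @geometric_seriesE _ 1 d (negbT (lt_eqF d1)) => /(congr1 (fun f => f n)).
rewrite /= seriesEord /= => E.
rewrite (eq_bigr (fun t : 'I_n => geometric 1 d t)); last by move=> i _; rewrite /geometric /= mul1r.
rewrite E mul1r ler_pdivrMr ?subr_gt0 // mulVf ?subr_eq0 ?(gt_eqF d1) //.
by rewrite gerBl exprn_ge0.
Qed.

Lemma partial_bound (d : R) (x : nat -> R) M n : 0 <= d < 1 -> (forall t, `|x t| <= M) ->
  `|series (fun t => d ^+ t * x t) n| <= M / (1 - d).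
Proof.
move=> /[dup] hd /andP[d0 d1] xM.
have M0 : 0 <= M by apply: le_trans (xM 0%N).
rewrite seriesEord /=; apply: le_trans (ler_norm_sum _ _ _) _.
apply: (@le_trans _ _ (\sum_(t < n) M * d ^+ t)).
  apply: ler_sum => i _; rewrite normrM normrX ger0_norm // mulrC.
  by apply: ler_wpM2r; [exact: exprn_ge0 | exact: xM].
by rewrite -mulr_sumr; apply: ler_wpM2l => //; exact: geo_sum_le.
Qed.

Lemma dsum_bound (d : R) (x : nat -> R) M : 0 <= d < 1 -> (forall t, `|x t| <= M) ->
  `|dsum d x| <= M.
Proof.
move=> /[dup] hd /andP[d0 d1] xM.
have cx : cvgn (series (fun t => d ^+ t * x t)).
  by apply: series_cvg_bounded => //; exists M.
have h := @limn_abs_le _ _ cx (fun n => @partial_bound d x M n hd xM).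
rewrite /dsum normrM ger0_norm; last by rewrite subr_ge0 ltW.
by rewrite mulrC -ler_pdivlMr ?subr_gt0.
Qed.

Lemma dsum0 (d : R) : dsum d (fun _ => 0) = 0.
Proof.
rewrite /dsum (_ : series _ = fun _ => 0) ?lim_cst ?mulr0 //.
by apply: funext => n; rewrite seriesEord /= big1 // => i _; rewrite mulr0.
Qed.

Definition q3 (a0 a1 a2 : R) (t : nat) : R :=
  if t == 0%N then a0 else if t == 1%N then a1 else if t == 2%N then a2 else 0.

Lemma dsum_q3 (d a0 a1 a2 : R) :
  dsum d (q3 a0 a1 a2) = (1 - d) * (a0 + d * a1 + d ^+ 2 * a2).
Proof.
rewrite /dsum; congr (_ * _); apply: cvg_lim => //; apply: cvg_near_cst.
near=> n.
have n3 : (3 <= n)%N by near: n; exists 3%N.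
rewrite seriesEord /=.
rewrite -(subnKC n3) /= 3!big_ord_recl big1 ?addr0.
  by rewrite /q3 /= expr0 mul1r expr1 addrA.
by move=> i _; rewrite /q3 /= mulr0.
Unshelve. all: by end_near. Qed.


Lemma pow_diff (b d s : R) t : 0 <= d <= b -> 0 <= s <= b ->
  b * `|d ^+ t - s ^+ t| <= t%:R * b ^+ t * `|d - s|.
Proof.
move=> /andP[d0 db] /andP[s0 sb]; have b0 : 0 <= b by apply: le_trans db.
elim: t => [|t ih]; first by rewrite !expr0 subrr normr0 mulr0 mul0r mul0r.
have -> : d ^+ t.+1 - s ^+ t.+1 = d * (d ^+ t - s ^+ t) + s ^+ t * (d - s).
  by rewrite !exprS; ring.
apply: (@le_trans _ _ (b * (d * `|d ^+ t - s ^+ t| + s ^+ t * `|d - s|))).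
  apply: ler_wpM2l => //; apply: le_trans (ler_normD _ _) _.
  by rewrite !normrM (ger0_norm d0) (ger0_norm (exprn_ge0 _ s0)).
rewrite mulrDr mulrA (mulrC b d) -mulrA.
apply: (@le_trans _ _ (d * (t%:R * b ^+ t * `|d - s|) + b * (b ^+ t * `|d - s|))).
  apply: lerD; first rewrite -[d * b * _]mulrA.
 exact: (@ler_wpM2l _ d d0 _ _ ih).
  apply: ler_wpM2l => //; apply: ler_wpM2r => //; exact: lerXn2r.
have h1 : d * (t%:R * b ^+ t * `|d - s|) <= b * (t%:R * b ^+ t * `|d - s|).
  apply: ler_wpM2r => //; apply: mulr_ge0 => //; apply: mulr_ge0 => //; exact: exprn_ge0.
apply: le_trans (lerD h1 (lexx _)) _.
by rewrite -natr1 exprS le_eqVlt; apply/orP; left; apply/eqP; ring.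
Qed.

Lemma wsum_id (b : R) n :
  (1 - b) ^+ 2 * \sum_(t < n) t%:R * b ^+ t = b - n%:R * b ^+ n + (n%:R - 1) * b ^+ n.+1.
Proof.
elim: n => [|n ih]; first by rewrite big_ord0 mulr0 mul0r expr1 add0r subr0; ring.
rewrite big_ord_recr /= mulrDr ih -natr1 !exprS; ring.
Qed.

Lemma wsum_le (b : R) n : 0 <= b <= 1 ->
  (1 - b) ^+ 2 * \sum_(t < n) t%:R * b ^+ t <= b.
Proof.
move=> /andP[b0 b1]; rewrite wsum_id exprS.
have u0 : 0 <= b ^+ n by exact: exprn_ge0.
have n0 : (0 : R) <= n%:R by [].
have h : 0 <= b ^+ n * (n%:R * (1 - b) + b).
  by apply: mulr_ge0 => //; apply: addr_ge0 => //; apply: mulr_ge0; lra.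
nra.
Qed.


Lemma partial_diff (b d s : R) (x : nat -> R) M n : 0 < b < 1 -> 0 <= d <= b -> 0 <= s <= b ->
  (forall t, `|x t| <= M) ->
  `|series (fun t => d ^+ t * x t) n - series (fun t => s ^+ t * x t) n|
     <= M * `|d - s| / (1 - b) ^+ 2.
Proof.
move=> /andP[b0 b1] hd hs xM.
have M0 : 0 <= M by apply: le_trans (xM 0%N).
have q0 : 0 < (1 - b) ^+ 2 by apply: exprn_gt0; rewrite subr_gt0.
rewrite -(@ler_pM2l _ b) //.
rewrite !seriesEord /= -sumrB.
apply: (@le_trans _ _ (b * \sum_(t < n) `|d ^+ t * x t - s ^+ t * x t|)).
  by apply: ler_wpM2l; [exact: ltW | exact: ler_norm_sum].
rewrite mulr_sumr.
apply: (@le_trans _ _ (\sum_(t < n) M * `|d - s| * (t%:R * b ^+ t))).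
  apply: ler_sum => i _; rewrite -mulrBl normrM mulrA.
  apply: (@le_trans _ _ (i%:R * b ^+ i * `|d - s| * `|x i|)).
    apply: ler_wpM2r => //; exact: pow_diff.
  have -> : M * `|d - s| * (i%:R * b ^+ i) = i%:R * b ^+ i * `|d - s| * M by ring.
  apply: ler_wpM2l; first by rewrite mulr_ge0 ?normr_ge0 // mulr_ge0 ?exprn_ge0 // ltW.
  exact: xM.
rewrite -mulr_sumr.
have W := @wsum_le b n (andb_true_intro (conj (ltW b0) (ltW b1))).
have W' : \sum_(t < n) t%:R * b ^+ t <= b / (1 - b) ^+ 2.
  by rewrite ler_pdivlMr // mulrC.
apply: le_trans (ler_wpM2l _ W') _; first by rewrite mulr_ge0.
by rewrite le_eqVlt; apply/orP; left; apply/eqP; ring.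
Qed.


Lemma A_lip (b d s : R) (x : nat -> R) M : 0 < b < 1 -> 0 <= d <= b -> 0 <= s <= b ->
  (forall t, `|x t| <= M) ->
  `|limn (series (fun t => d ^+ t * x t)) - limn (series (fun t => s ^+ t * x t))|
     <= M * `|d - s| / (1 - b) ^+ 2.
Proof.
move=> hb hd hs xM.
have b1 : b < 1 by case/andP: hb.
have cd : cvgn (series (fun t => d ^+ t * x t)).
  apply: series_cvg_bounded; last by exists M.
  by case/andP: hd => -> db /=; apply: le_lt_trans b1.
have cs : cvgn (series (fun t => s ^+ t * x t)).
  apply: series_cvg_bounded; last by exists M.
  by case/andP: hs => -> sb /=; apply: le_lt_trans b1.
rewrite -limB //; apply: limn_abs_le; first exact: is_cvgB.
by move=> n; exact: partial_diff.
Qed.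

Lemma dsum_cont (s : R) (x : nat -> R) : 0 < s < 1 -> linfty x ->
  forall del, 0 < del -> exists2 e, 0 < e &
    forall d, 0 <= d -> `|d - s| < e -> `|dsum d x - dsum s x| < del.
Proof.
move=> /andP[s0 s1] [M xM] del del0.
have M0 : 0 <= M by apply: le_trans (xM 0%N).
set b := (1 + s) / 2.
have b0 : 0 < b by rewrite /b; lra.
have b1 : b < 1 by rewrite /b; lra.
have sb : s <= b by rewrite /b; lra.
have q0 : 0 < (1 - b) ^+ 2 by apply: exprn_gt0; rewrite subr_gt0.
set K := M / (1 - b) ^+ 2 + M / (1 - s).
have s10 : 0 < 1 - s by lra.
have K0 : 0 <= K by rewrite /K addr_ge0 // divr_ge0 // ltW.
exists (Num.min ((1 - s) / 2) (del / (K + 1))).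
  by rewrite lt_min; apply/andP; split; [rewrite divr_gt0 // subr_gt0 | rewrite divr_gt0 // ltr_wpDl].
move=> d d0; rewrite lt_min => /andP[e1 e2].
have db : d <= b.
  have := ler_norm (d - s); rewrite /b => h; lra.
have hA := @A_lip b d s x M (andb_true_intro (conj b0 b1))
  (andb_true_intro (conj d0 db)) (andb_true_intro (conj (ltW s0) sb)) xM.
have cs : cvgn (series (fun t => s ^+ t * x t)).
  by apply: series_cvg_bounded => //; [rewrite (ltW s0) | exists M].
have hs : `|limn (series (fun t => s ^+ t * x t))| <= M / (1 - s).
  apply: limn_abs_le => // n; apply: partial_bound => //.
  by rewrite (ltW s0).
set Ad := limn (series (fun t => d ^+ t * x t)) in hA *.
set As := limn (series (fun t => s ^+ t * x t)) in hA hs *.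
have -> : dsum d x - dsum s x = (1 - d) * (Ad - As) + (s - d) * As.
  by rewrite /dsum -/Ad -/As; ring.
apply: le_lt_trans (ler_normD _ _) _.
rewrite !normrM.
have d1 : `|1 - d| <= 1 by rewrite ger0_norm; lra.
have h1 : `|1 - d| * `|Ad - As| <= M * `|d - s| / (1 - b) ^+ 2.
  apply: le_trans hA; rewrite -[X in _ <= X]mul1r.
  by apply: ler_wpM2r.
have h2 : `|s - d| * `|As| <= `|d - s| * (M / (1 - s)).
  by rewrite distrC; apply: ler_wpM2l.
apply: le_lt_trans (lerD h1 h2) _.
have -> : M * `|d - s| / (1 - b) ^+ 2 + `|d - s| * (M / (1 - s)) = `|d - s| * K.
  by rewrite /K; ring.
have ds0 : 0 <= `|d - s| by [].
have : `|d - s| * (K + 1) < del by rewrite -ltr_pdivlMr // ltr_wpDl.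
nra.
Qed.

End helpers.

Lemma Ifun_D (R : realType) (D : set R) (c : R -> \bar R) x :
  D `<=` `]0, 1[%classic ->
  (forall d, d \in `[0, 1] -> ~ D d -> c d = +oo%E) ->
  Ifun c x = ereal_inf [set objval c x d | d in D].
Proof.
move=> D01 cD; apply/le_anti/andP; split.
  apply: le_ereal_inf_tmp => _ [d Dd <-]; apply: ereal_inf_lbound.
  exists d => //; have := D01 d Dd; rewrite /= !in_itv /= => /andP[d0 d1].
  by rewrite d1 ltW.
apply: le_ereal_inf_tmp => _ [d d01 <-].
have [Dd|nDd] := pselect (D d).
  by apply: ereal_inf_lbound; exists d.
move: d01; rewrite /= in_itv /= => /andP[d0 d1].
rewrite /objval cD ?addey ?leey // in_itv /= d0 ltW //.
Qed.

Lemma una_of_ii (R : realType) (D : set R) (c : R -> \bar R) :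
  D `<=` `]0, 1[%classic ->
  (forall d, d \in `[0, 1] -> ~ D d -> c d = +oo%E) -> unanimity D c.
Proof.
move=> D01 cD x y _ _ H; rewrite /pref !(@Ifun_D R D c _ D01 cD).
apply: le_ereal_inf_tmp => _ [d Dd <-]; apply: ge_ereal_inf.
exists (objval c y d); first by exists d.
by rewrite /objval; apply: leeD => //; rewrite lee_fin; apply: H.
Qed.

Lemma ii_of_una (R : realType) (D : set R) (c : R -> \bar R) :
  D `<=` `]0, 1[%classic -> closed D -> (forall d, d \in `[0, 1] -> (0 <= c d)%E) -> c 1 = +oo%E ->
  unanimity D c -> (forall d, d \in `[0, 1] -> ~ D d -> c d = +oo%E).
Proof.
move=> D01 cD c0 c1 U d d01 nDd.
have := c0 d d01; case Hc: (c d) => [v| |] // v0.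
exfalso.
have d1 : d < 1.
  move: d01; rewrite in_itv /= => /andP[d0]; rewrite le_eqVlt => /orP[/eqP e|//].
  by move: Hc; rewrite e c1.
have d0 : 0 <= d by move: d01; rewrite in_itv /= => /andP[].
have {}v0 : 0 <= v by rewrite -lee_fin.
have [r r0 rD] := @closed_gap R D d cD nDd.
set lam := (v + 1) / ((1 - d) * r ^+ 2).
have den0 : 0 < (1 - d) * r ^+ 2 by rewrite mulr_gt0 ?subr_gt0 // exprn_gt0.
have lam0 : 0 <= lam by rewrite /lam divr_ge0 // ltW // ltr_wpDl.
set x := @q3 R (lam * (d ^+ 2 - r ^+ 2)) (lam * (-2 * d)) lam.
have xb : linfty x.
  exists (`|lam * (d ^+ 2 - r ^+ 2)| + `|lam * (-2 * d)| + `|lam|) => t.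
  rewrite /x /q3; case: ifP => _; first by rewrite -addrA lerDl addr_ge0.
  case: ifP => _; first by rewrite addrAC lerDr addr_ge0.
  case: ifP => _; first by rewrite lerDr addr_ge0.
  by rewrite normr0 !addr_ge0.
have h0 : linfty (fun _ : nat => (0 : R)) by exists 0 => t; rewrite normr0.
have := U x _ xb h0.
have hD : forall e, D e -> dsum e (fun _ => 0) <= dsum e x.
  move=> e De; rewrite dsum0 /x dsum_q3.
  have e1 : e < 1.
    by have := D01 e De; rewrite /= in_itv /= => /andP[].
  have hr : r ^+ 2 <= (e - d) ^+ 2.
    rewrite -(real_normK (num_real (e - d))).
    have := rD e De; have := normr_ge0 (e - d) => n0 h.
    rewrite !expr2; nra.
  have : 0 <= lam * ((e - d) ^+ 2 - r ^+ 2) by apply: mulr_ge0 => //; rewrite subr_ge0.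
  move=> h; have h1 : 0 <= 1 - e by rewrite subr_ge0 ltW.
  have -> : e ^+ 2 = e * e by rewrite expr2.
  have -> : d ^+ 2 = d * d by rewrite expr2.
  move: h; rewrite !expr2 => h.
  nra.
move=> /(_ hD); rewrite /pref => P.
have I0 : (0 <= Ifun c (fun _ : nat => 0%R))%E.
  apply: le_ereal_inf_tmp => _ [e e01 <-]; rewrite /objval dsum0 add0e; apply: c0.
  by move: e01; rewrite /= !in_itv /= => /andP[-> /ltW ->].
have hl : lam * ((1 - d) * r ^+ 2) = v + 1 by rewrite /lam mulfVK // gt_eqF.
have Ix : (Ifun c x <= (-1)%:E)%E.
  apply: ge_ereal_inf; exists (objval c x d).
    by exists d => //; rewrite /= in_itv /= d0 d1.
  rewrite /objval Hc /x dsum_q3 -EFinD lee_fin.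
  have -> : (1 - d) * (lam * (d ^+ 2 - r ^+ 2) + d * (lam * (-2 * d)) + d ^+ 2 * lam) + v
     = - (lam * ((1 - d) * r ^+ 2)) + v by ring.
  rewrite hl; lra.
have := le_trans I0 (le_trans P Ix); rewrite lee_fin; lra.
Qed.

Lemma lsc_local (R : realType) (c : R -> \bar R) (x : nat -> R) (s r : R) :
  (forall d, d \in `[0, 1] -> (0 <= c d)%E) -> lsc01 c -> linfty x ->
  0 < s < 1 -> (r%:E < objval c x s)%E ->
  exists2 e : R, 0 < e & exists2 r1 : R, r < r1 &
    forall d, d \in `[0, 1] -> `|d - s| < e -> (r1%:E <= objval c x d)%E.
Proof.
move=> c0 lsc xb /[dup] s01 /andP[s0 s1] ho.
have s01' : s \in `[0, 1] by rewrite in_itv /= !ltW.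
have [del del0 hdel] : exists2 del : R, 0 < del & ((r + 2 * del - dsum s x)%:E < c s)%E.
  move: ho; rewrite /objval; case Hc: (c s) => [v| |] //.
  - rewrite -EFinD lte_fin => h; exists ((dsum s x + v - r) / 3).
      by rewrite divr_gt0 //; lra.
    by rewrite lte_fin; lra.
  - by move=> _; exists 1 => //; rewrite ltey.
have [e1 e10 he1] := lsc s s01' _ hdel.
have [e2 e20 he2] := @dsum_cont R s x s01 xb del del0.
exists (Num.min e1 e2); first by rewrite lt_min e10 e20.
exists (r + del); first by rewrite ltrDl.
move=> d d01; rewrite lt_min => /andP[de1 de2].
have hc := he1 d d01 de1.
have d0 : 0 <= d by move: d01; rewrite in_itv /= => /andP[].
have := he2 d d0 de2; rewrite ltr_norml => /andP[hl _].
rewrite /objval; move: hc; case: (c d) => [w| |] //.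
  by rewrite -EFinD !lte_fin lee_fin => hw; lra.
by move=> _; rewrite addey // leey.
Qed.

Lemma attain (R : realType) (D : set R) (c : R -> \bar R) (x : nat -> R) :
  D !=set0 -> closed D -> D `<=` `]0, 1[%classic ->
  (forall d, d \in `[0, 1] -> (0 <= c d)%E) -> lsc01 c -> linfty x ->
  exists2 d, D d & ereal_inf [set objval c x d | d in D] = objval c x d.
Proof.
move=> [d0 Dd0] cD D01 c0 lsc xb.
have Din : forall d, D d -> 0 < d < 1.
  by move=> d Dd; have := D01 d Dd; rewrite /= in_itv.
have Din' : forall d, D d -> d \in `[0, 1].
  by move=> d /Din /andP[a b]; rewrite in_itv /= !ltW.
set m := ereal_inf _.
have [M xM] := xb.
have lbD : forall d, D d -> ((- M)%:E <= objval c x d)%E.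
  move=> d Dd; rewrite /objval -[X in (X <= _)%E]adde0; apply: leeD; last exact: c0 (Din' d Dd).
  rewrite lee_fin; have := @dsum_bound R d x M; case/andP: (Din d Dd) => a b.
  by move=> /(_ (andb_true_intro (conj (ltW a) b)) xM); rewrite ler_norml => /andP[].
have mlb : ((- M)%:E <= m)%E by apply: le_ereal_inf_tmp => _ [d Dd <-]; exact: lbD.
have mub : forall d, D d -> (m <= objval c x d)%E by move=> d Dd; apply: ereal_inf_lbound; exists d.
have [//|Hn] := pselect (exists2 d, D d & m = objval c x d).
have glb : forall z, (forall d, D d -> (z <= objval c x d)%E) -> (z <= m)%E.
  by move=> z hz; apply: le_ereal_inf_tmp => _ [d Dd <-]; exact: hz.
exfalso.
move: mlb mub Hn glb; case: m => [r| |] // _ mub Hn glb; last first.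
  apply: Hn; exists d0 => //; apply/esym/le_anti; rewrite leey /=.
  exact: mub.
have hlt : forall d, D d -> (r%:E < objval c x d)%E.
  move=> d Dd; rewrite lt_neqAle mub // andbT; apply/negP => /eqP e.
  by apply: Hn; exists d.
set A := [set u : R | exists2 r0 : R, r < r0 &
  forall d, D d -> d <= u -> (r0%:E <= objval c x d)%E].
have A0 : A 0.
  exists (r + 1); first by rewrite ltrDl.
  by move=> d Dd; have := Din d Dd => /andP[a _] b; exfalso; lra.
have Aub : forall u, A u -> u < 1.
  move=> u [r0 rr0 h]; rewrite ltNge; apply/negP => u1.
  have : (r0%:E <= r%:E)%E.
    apply: glb => d Dd; apply: h => //; have := Din d Dd => /andP[_ b]; lra.
  by rewrite lee_fin; lra.
have hsA : has_sup A.
  split; first by exists 0.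
  by exists 1 => u /Aub /ltW.
set s := sup A.
have sub := sup_upper_bound hsA.
have [e e0 [r1 rr1 he]] : exists2 e : R, 0 < e & exists2 r1 : R, r < r1 &
    forall d, D d -> `|d - s| < e -> (r1%:E <= objval c x d)%E.
  have [Ds|nDs] := pselect (D s).
    have [e e0 [r1 rr1 he]] := @lsc_local R c x s r c0 lsc xb (Din s Ds) (hlt s Ds).
    exists e => //; exists r1 => // d Dd; exact: he (Din' d Dd).
  have [g g0 hg] := @closed_gap R D s cD nDs.
  exists g => //; exists (r + 1); first by rewrite ltrDl.
  by move=> d Dd hd; exfalso; have := hg d Dd; lra.
have [u Au hu] := @sup_adherent R A (e / 2) ltac:(lra) hsA.
have : A (s + e / 2).
  case: Au => r0 rr0 h0.
  exists (Num.min r0 r1); first by rewrite lt_min rr0 rr1.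
  move=> d Dd dle.
  have [du|ud] := leP d u.
    apply: le_trans (h0 d Dd du); rewrite lee_fin ge_min lexx //.
  apply: le_trans (he d Dd _).
    by rewrite lee_fin ge_min lexx orbT.
  rewrite ltr_norml; apply/andP; split; rewrite -/s in hu; lra.
move/sub; rewrite -/s; lra.
Qed.

Theorem proposition4 (R : realType) (D : set R) (c : R -> \bar R) :
  D !=set0 -> closed D -> D `<=` `]0, 1[%classic ->
  (forall d, d \in `[0, 1] -> (0 <= c d)%E) ->
  grounded c -> lsc01 c -> c 1 = +oo%E ->
  (unanimity D c <->
     (forall d, d \in `[0, 1] -> ~ D d -> c d = +oo%E)) /\
  (unanimity D c ->
     forall x : nat -> R, linfty x ->
       Ifun c x = ereal_inf [set objval c x d | d in D] /\
       exists2 d, D d & Ifun c x = objval c x d).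
Proof.
move=> D0 cD D01 c0 _ lsc c1.
have eqv : unanimity D c <-> (forall d, d \in `[0, 1] -> ~ D d -> c d = +oo%E).
  split; first exact: ii_of_una.
  exact: una_of_ii.
split => // U x xb.
have ii := @ii_of_una R D c D01 cD c0 c1 U.
have E := @Ifun_D R D c x D01 ii.
split => //.
have [d Dd h] := @attain R D c x D0 cD D01 c0 lsc xb.
by exists d => //; rewrite E.
Qed.
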